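(* Let $\mathbf m\in\mathbb C^d$ with $\operatorname{supp}(\widehat{\mathbf m})\subseteq[\rho]_0$, where $\rho<d/2$, so that $\widehat{\mathbf m}=(a_0e^{i\theta_0},\dots,a_{\rho-1}e^{i\theta_{\rho-1}},0,\dots,0)^T$ with $a_j,\theta_j\in\mathbb R$. Let $2\le\kappa\le\rho$ and $$\mu_1=\min_{|p|\le\kappa-1,\ q\in[d]_0}\left|\left(F_d(\widehat{\mathbf m}\circ S_p\overline{\widehat{\mathbf m}})\right)_q\right|.$$ If $|a_0|>(\rho-1)|a_1|$ and $|a_1|\ge|a_2|\ge\cdots\ge|a_{\rho-1}|>0$, then $\mu_1>0$.
   Context: Vectors in $\mathbb C^d$ are indexed by $[d]_0=\{0,1,\dots,d-1\}$, with all indices interpreted modulo $d$. $F_d$ is the DFT matrix $(F_d)_{j,k}=e^{-2\pi i jk/d}$ and $\widehat{\mathbf m}=F_d\mathbf m$. The shift is $(S_p\mathbf x)_n=x_{n+p}$; $\circ$ is the entrywise product and $\overline{\mathbf x}$ the entrywise conjugate; $\operatorname{supp}(\mathbf x)=\{n:x_n\neq0\}$. *)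

(* Defs.v *)
(* Complex numbers are modelled by an arbitrary
   numClosedFieldType C (e.g. algC). *)
From HB Require Import structures.
From mathcomp Require Import all_boot all_order all_algebra.
Set Implicit Arguments. Unset Strict Implicit. Unset Printing Implicit Defensive.
Import Order.TTheory GRing.Theory Num.Theory.
Local Open Scope ring_scope.

(* Vectors in C^d are functions 'I_d -> C; indices are taken modulo d. *)

Lemma ord_dpos (d : nat) (n : 'I_d) : (0 < d)%N.
Proof. exact: leq_ltn_trans (leq0n n) (ltn_ord n). Qed.

Definition idx_add (d : nat) (n : 'I_d) (p : int) : 'I_d :=
  Ordinal (ltn_pmod (n + absz (p %% (d : int))%Z) (ord_dpos n)).

(* DFT matrix F_d applied to x, with w playing the role of e^{-2 pi i / d}:
   (F_d x)_j = sum_k w^(j k) x_k *)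
Definition dft (C : numClosedFieldType) (d : nat) (w : C) (x : 'I_d -> C)
  : 'I_d -> C := fun j => \sum_(k < d) w ^+ (j * k) * x k.

Definition shift (C : numClosedFieldType) (d : nat) (p : int) (x : 'I_d -> C)
  : 'I_d -> C := fun n => x (idx_add n p).

Definition hadamard (C : numClosedFieldType) (d : nat) (x y : 'I_d -> C)
  : 'I_d -> C := fun n => x n * y n.
Definition vconj (C : numClosedFieldType) (d : nat) (x : 'I_d -> C)
  : 'I_d -> C := fun n => (x n)^*.

(* Main.v *)
Require Import Defs.
From HB Require Import structures.
From mathcomp Require Import all_boot all_order all_algebra zify.
Import Order.TTheory GRing.Theory Num.Theory.
Local Open Scope ring_scope.

Lemma key_sum (R : numDomainType) (d : nat) (f B : 'I_d -> R) (k0 : 'I_d) :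
  (forall k, k != k0 -> `|f k| <= B k) ->
  \sum_(k | k != k0) B k < `|f k0| -> 0 < `|\sum_k f k|.
Proof.
move=> hB hlt; rewrite (bigD1 k0) //=.
set S := \sum_(k | k != k0) f k.
have hS : `|S| < `|f k0|.
  apply: le_lt_trans hlt; apply: le_trans (ler_norm_sum _ _ _) _.
  by apply: ler_sum => k hk; apply: hB.
have h1 : `|f k0| <= `|f k0 + S| + `|S|.
  by rewrite -[X in `|X|](addrK S) (le_trans (ler_normD _ _)) // normrN.
rewrite -subr_gt0 in hS; apply: lt_le_trans hS _.
by rewrite lerBlDr.
Qed.

Lemma count_sum (R : numDomainType) (d rho : nat) (K : R) (k0 : 'I_d) :
  (rho <= d)%N -> (k0 < rho)%N ->
  \sum_(k | k != k0) (if (k < rho)%N then K else 0) = (rho.-1)%:R * K.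
Proof.
move=> hd hk0.
have tot : \sum_(k < d) (if (k < rho)%N then K else 0) = rho%:R * K.
  rewrite -(big_mkord xpredT (fun k => if (k < rho)%N then K else 0)).
  rewrite (big_cat_nat (n:=rho)) //=.
  rewrite (eq_big_nat _ _ (F2 := fun _ => K)); last by move=> i /andP[_ ->].
  rewrite sumr_const_nat subn0 big1_seq ?addr0 ?mulr_natl //.
  move=> i /andP[_]; rewrite mem_index_iota => /andP[h _].
  by rewrite ltnNge h.
move: tot; rewrite (bigD1 k0) //= hk0 => tot.
apply: (addrI K); rewrite tot.
case: rho hk0 {hd tot} => // r _ /=.
by rewrite -natr1 mulrDl mul1r addrC.
Qed.

Lemma t1 (n d : nat) : (n < d)%N -> absz (Negz n %% d)%Z = (d - n.+1)%N.
Proof. move=> h. rewrite modNz_nat; last lia. rewrite modn_small //. lia. Qed.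
Lemma t2 (n d : nat) : (n < d)%N -> absz (Posz n %% d)%Z = n.
Proof. move=> h. rewrite modz_nat modn_small //. Qed.

Theorem mainTheorem8 (C : numClosedFieldType) (d : nat) (w : C)
    (hw : d.-primitive_root w)
    (m : 'I_d -> C) (rho kappa : nat) (a u : nat -> C)
    (hrho : (rho.*2 < d)%N)
    (hsupp : forall j : 'I_d, (rho <= j)%N -> dft w m j = 0)
    (ha_real : forall j, (j < rho)%N -> a j \is Num.real)
    (hu : forall j, (j < rho)%N -> `|u j| = 1)
    (hmhat : forall j : 'I_d, (j < rho)%N -> dft w m j = a j * u j)
    (hkappa : (2 <= kappa <= rho)%N)
    (ha0 : `|a 0%N| > (rho.-1)%:R * `|a 1%N|)
    (hdec : forall j, (1 <= j)%N -> (j.+1 < rho)%N -> `|a j.+1| <= `|a j|)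
    (hlast : `|a rho.-1| > 0) :
  forall (p : int) (q : 'I_d), (absz p <= kappa.-1)%N ->
    0 < `| dft w (hadamard (dft w m) (shift p (vconj (dft w m)))) q |.
Proof.
move=> p q hp.
have d_gt0 : (0 < d)%N by lia.
have hw1 : `|w| = 1.
  have h : `|w| ^+ d = 1 by rewrite -normrX prim_expr_order // normr1.
  by apply/eqP; rewrite -(pexpr_eq1 d_gt0 (normr_ge0 w)); apply/eqP.
pose b n := if (n < rho)%N then `|a n| else 0.
have b_ge0 : forall n, 0 <= b n by move=> n; rewrite /b; case: ifP.
have hv : forall k : 'I_d, `|dft w m k| = b k.
  move=> k; rewrite /b; case: ifP => hk.
    by rewrite hmhat // normrM hu // mulr1.
  by rewrite hsupp ?normr0 //; lia.
have monoa : forall i j, (1 <= i)%N -> (i <= j)%N -> (j < rho)%N -> `|a j| <= `|a i|.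
  move=> i j hi; elim: j => [|j IH] hij hj; first by lia.
  case: (ltngtP i j.+1) hij => // [hlt _|-> _]; last by [].
  by apply: le_trans (hdec j _ hj) (IH _ _); lia.
have mono : forall i j, (1 <= i)%N -> (i <= j)%N -> (i < rho)%N -> b j <= b i.
  move=> i j hi hij hir; rewrite /b hir; case: ifP => hj; last exact: normr_ge0.
  exact: monoa.
have bpos : forall s, (s < rho)%N -> 0 < b s.
  move=> s hs; rewrite /b hs; case: s hs => [|s] hs.
    by apply: le_lt_trans ha0; rewrite mulr_ge0.
  apply: lt_le_trans hlast _; apply: monoa; lia.
have b0 : b 0%N = `|a 0%N| by rewrite /b; have -> : (0 < rho)%N by lia.
have b1 : b 1%N = `|a 1%N| by rewrite /b; have -> : (1 < rho)%N by lia.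
have hK0 : 0 <= `|a 1%N| by [].
rewrite /dft /hadamard /shift /vconj.
have hterm : forall (p : int) (k : 'I_d),
   `|w ^+ (q * k) * (dft w m k * (dft w m (idx_add k p))^*)| = b k * b (idx_add k p).
  by move=> p0 k; rewrite !normrM normrX hw1 expr1n mul1r norm_conjC !hv.
case: p hp => [s|n] hp.
- have hs : (s < rho)%N by lia.
  have hidx : forall k : 'I_d, nat_of_ord (idx_add k s) = ((k + s) %% d)%N.
    by move=> k; rewrite /= t2 //; lia.
  pose k0 := Ordinal d_gt0.
  apply: (@key_sum _ _ _ (fun k : 'I_d => if (k < rho)%N then `|a 1%N| * b s else 0) k0).
    move=> k hk; rewrite hterm hidx.
    case: ifP => hkr; last by rewrite /b hkr mul0r.
    have hk1 : (1 <= k)%N.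
      by rewrite lt0n; apply: contra hk => /eqP h; apply/eqP/val_inj.
    rewrite modn_small; last by lia.
    apply: ler_pM => //; first by rewrite -b1; apply: mono; lia.
    case: s hs hidx {hp} => [|s] hs _.
      rewrite addn0; apply: le_trans (mono 1%N k _ _ _) _ => //; [lia|].
      rewrite b1 b0; apply: le_trans (ltW ha0); apply: ler_peMl => //.
      rewrite (ler_nat C 1); lia.
    by apply: mono; lia.
  rewrite count_sum; [|lia|by rewrite /=; lia].
  rewrite hterm hidx /= add0n modn_small; last by lia.
  by rewrite b0 mulrA ltr_pM2r // bpos.
- have hs : (n.+1 < rho)%N by move: hp => /=; lia.
  have hidx : forall k : 'I_d, nat_of_ord (idx_add k (Negz n)) = ((k + (d - n.+1)) %% d)%N.
    by move=> k; rewrite /= t1 //; lia.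
  have hs0 : (n.+1 < d)%N by lia.
  pose k0 := Ordinal hs0.
  apply: (@key_sum _ _ _ (fun k : 'I_d => if (k < rho)%N then b n.+1 * `|a 1%N| else 0) k0).
    move=> k hk; rewrite hterm hidx.
    case: ifP => hkr; last by rewrite /b hkr mul0r.
    have hne : nat_of_ord k <> n.+1.
      by move=> e; move/eqP: hk; apply; apply: val_inj.
    case: (ltnP k n.+1) => hkn.
      rewrite modn_small; last by lia.
      have -> : b (k + (d - n.+1))%N = 0 by rewrite /b; case: ifP => // ?; lia.
      by rewrite mulr0 mulr_ge0 ?b_ge0.
    rewrite (_ : (k + (d - n.+1) = (k - n.+1) + d)%N); last by lia.
    rewrite modnDr modn_small; last by lia.
    apply: ler_pM => //; first by apply: mono; lia.
    by rewrite -b1; apply: mono; lia.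
  rewrite count_sum; [|lia|by rewrite /=; lia].
  rewrite hterm hidx /= (_ : (n.+1 + (d - n.+1) = d)%N); last by lia.
  by rewrite modnn b0 mulrCA ltr_pM2l // bpos.
Qed.
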